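(* Let $l\ge 1$ and let $X_l,\dots,X_1$ be nonempty sets. Then the monoid $M(X_l)\circ\cdots\circ M(X_1)$ is isomorphic to the monoid $\mathrm{Ell}(r_0,T(|X_l|,\dots,|X_1|))$; an isomorphism is given by restricting an elliptic contraction to the set of leaves $X_l\times\cdots\times X_1$.
   Context: Rooted tree, depth, father/son and elliptic contraction: a rooted tree $(r_0,T)$ is a tree with a distinguished vertex $r_0$; $\mathrm{dep}(v)=d_T(r_0,v)$ (geodesic distance); an elliptic contraction is a map on vertices which does not increase geodesic distance and preserves depth. $\mathrm{Ell}(r_0,T)$ is the monoid of all elliptic contractions of $(r_0,T)$ into itself under composition (maps written on the right). $T(n_l,\dots,n_1)$ is the rooted uniformly branching tree of depth $l$ in which every vertex at depth $i-1$ has exactly $n_i$ sons; its vertex set is represented as $\{r_0\}\cup\bigcup_{i=1}^l X_i\times\cdots\times X_1$ with $|X_i|=n_i$, where $(x_i,\dots,x_1)$ is a son of $(x_{i-1},\dots,x_1)$ and each $(x_1)$ is a son of $r_0$. For $X=X_l\times\cdots\times X_1$, let $\pi_{[i,1]}:X\to X_i\times\cdots\times X_1$ be the projection on the last $i$ components. $M(X_l)\circ\cdots\circ M(X_1)$ denotes the monoid (under composition) of all full transformations $\varphi$ of $X_l\times\cdots\times X_1$ that are sequential: for every $i$, if $x,x'$ have the same last $i$ components then so do $x\varphi$ and $x'\varphi$. *)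

(* Defs.v *)
From mathcomp Require Import all_boot.
Set Implicit Arguments. Unset Strict Implicit. Unset Printing Implicit Defensive.

(* The sets X_l, ..., X_1 are given as predicates X l, ..., X 1 on a common
   carrier type A (any family of sets embeds into a disjoint union).
   A vertex of T(|X_l|,...,|X_1|) at depth k is the list [:: x_k; ...; x_1]
   with x_j \in X j; the root r0 is [::] and x :: s is a son of s. *)
Section UniformTree.
Variables (A : Type) (l : nat) (X : nat -> A -> Prop).

Fixpoint valid_path (s : seq A) : Prop :=
  match s with
  | [::] => True
  | a :: s' => X (size s').+1 a /\ valid_path s'
  end.

Definition is_vertex (s : seq A) : Prop := valid_path s /\ size s <= l.

Definition vertex := {s : seq A | is_vertex s}.

Definition root : vertex := exist is_vertex [::] (conj I (leq0n l)).

Definition adj (u v : vertex) : Prop :=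
  (exists a, sval u = a :: sval v) \/ (exists a, sval v = a :: sval u).

Inductive walk : nat -> vertex -> vertex -> Prop :=
| walk0 u : walk 0 u u
| walkS n u w v : adj u w -> walk n w v -> walk n.+1 u v.

Definition geodist (u v : vertex) (n : nat) : Prop :=
  walk n u v /\ forall m, walk m u v -> n <= m.

Definition dep (v : vertex) (n : nat) : Prop := geodist root v n.

Definition elliptic (f : vertex -> vertex) : Prop :=
  (forall u v n m, geodist u v n -> geodist (f u) (f v) m -> m <= n) /\
  (forall v n, dep v n -> dep (f v) n).

Definition leaf := {v : vertex | size (sval v) = l}.

(* sequential transformations of X_l x ... x X_1 ; drop (l - i) gives the
   last i components (x_i, ..., x_1) *)
Definition sequential (phi : leaf -> leaf) : Prop :=
  forall (i : nat) (x y : leaf),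
    drop (l - i) (sval (sval x)) = drop (l - i) (sval (sval y)) ->
    drop (l - i) (sval (sval (phi x))) = drop (l - i) (sval (sval (phi y))).

Definition restricts (f : vertex -> vertex) (phi : leaf -> leaf) : Prop :=
  forall x : leaf, sval (phi x) = f (sval x).

End UniformTree.

(* Main.v *)
Require Import Defs.
From mathcomp Require Import all_boot.
From Stdlib Require Import Lia ProofIrrelevance ClassicalEpsilon Classical FunctionalExtensionality.

Ltac mlia := repeat match goal with H : is_true (_ <= _) |- _ => apply (elimT leP) in H end;
  try apply/leP; rewrite -?plusE -?minusE -?multE;
  repeat match goal with H : context[addn] |- _ => rewrite -?plusE in H
                       | H : context[subn] |- _ => rewrite -?minusE in H end; lia.

Set Implicit Arguments. Unset Strict Implicit.
Section Aux.
Variables (A : Type) (l : nat) (X : nat -> A -> Prop).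
Local Notation vtx := (vertex l X).
Local Notation sz v := (size (sval v)).
Local Notation walk := (@walk A l X).
Local Notation adj := (@adj A l X).
Local Notation geodist := (@geodist A l X).
Local Notation dep := (@dep A l X).
Local Notation elliptic := (@elliptic A l X).

Lemma vert_eq (u v : vtx) : sval u = sval v -> u = v.
Proof.
case: u => s ps; case: v => t pt /= E; subst t; f_equal; apply: proof_irrelevance.
Qed.

Lemma valid_drop n s : valid_path X s -> valid_path X (drop n s).
Proof.
elim: s n => [|a s IH] [|n] //= [Ha Hs]; exact: IH.
Qed.

Lemma vdrop_ok n (v : vtx) : is_vertex l X (drop n (sval v)).
Proof.
case: v => s [Hs Hl] /=; split; first exact: valid_drop.
by rewrite size_drop; apply: leq_trans (leq_subr _ _) Hl.
Qed.

Definition vdrop n (v : vtx) : vtx := exist _ _ (vdrop_ok n v).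

Lemma adj_sym u v : adj u v -> adj v u.
Proof. by case=> H; [right|left]. Qed.

Lemma walk_cat n m u w v : walk n u w -> walk m w v -> walk (n + m) u v.
Proof.
elim=> [x|k x y z Hxy Hw IH] // Hm.
by rewrite addSn; apply: walkS Hxy (IH Hm).
Qed.

Lemma walk_rev n u v : walk n u v -> walk n v u.
Proof.
elim=> [x|k x y z Hxy Hw IH]; first exact: walk0.
rewrite -addn1; apply: walk_cat IH _.
exact: (walkS (adj_sym Hxy) (walk0 x)).
Qed.

Lemma walk_down j (u : vtx) : j <= sz u -> walk j u (vdrop j u).
Proof.
elim: j u => [|j IH] u Hj.
  have -> : vdrop 0 u = u by apply: vert_eq; rewrite /= drop0.
  exact: walk0.
case: u Hj => [[|a s] ps] //= Hj.
have ps' : is_vertex l X s.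
  by case: ps => [[_ H1] H2]; split => //; apply: ltnW.
pose w : vtx := exist _ s ps'.
apply: (@walkS _ _ _ _ _ w); first by left; exists a.
have -> : vdrop j.+1 (exist _ (a :: s) ps) = vdrop j w by apply: vert_eq.
exact: IH.
Qed.

Lemma walk_anc m u v : walk m u v ->
  exists k, [/\ k <= sz u, k <= sz v,
    drop (sz u - k) (sval u) = drop (sz v - k) (sval v)
    & (sz u - k) + (sz v - k) <= m].
Proof.
elim=> [x|n x w y Hxw Hw [k [H1 H2 H3 H4]]].
  by exists (sz x); rewrite subnn addn0.
case: Hxw => [[a Ea]|[a Ea]].
- exists k; rewrite Ea /=; split.
  + by apply: leq_trans H1 _.
  + by [].
  + by rewrite subSn // -H3.
  + by rewrite subSn //= addSn.
- move: H1 H3 H4; rewrite Ea /= => H1 H3 H4.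
  case: (ltnP k (size (sval x)).+1) => Hk.
  + exists k; split => //.
    * by rewrite -H3 subSn.
    * move: H4; rewrite subSn //= addSn; move=> ?; mlia.
  + have ek : k = (size (sval x)).+1 by apply/eqP; rewrite eqn_leq H1.
    subst k; exists (size (sval x)); split => //.
    * by apply: ltnW.
    * rewrite subnn drop0.
      have := congr1 (drop 1) H3; rewrite subnn drop0 /= drop0 => E; rewrite {1}E.
      by rewrite drop_drop; congr drop; mlia.
    * by rewrite subnn add0n; mlia.
Qed.

Lemma walk_via k (u v : vtx) : k <= sz u -> k <= sz v ->
  drop (sz u - k) (sval u) = drop (sz v - k) (sval v) ->
  walk ((sz u - k) + (sz v - k)) u v.
Proof.
move=> H1 H2 H3.
apply: walk_cat (walk_down (leq_subr _ _)) _.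
have -> : vdrop (sz u - k) u = vdrop (sz v - k) v by apply: vert_eq.
exact/walk_rev/walk_down/leq_subr.
Qed.

Lemma geo_exists n u v : walk n u v -> exists n', n' <= n /\ geodist u v n'.
Proof.
elim: n {-2}n (leqnn n) => [|N IH] n Hn Hw.
  by exists n; split => //; split => // m _; rewrite leqn0 in Hn; rewrite (eqP Hn).
case: (classic (exists m, m < n /\ walk m u v)) => [[m [Hm Hw']]|Hno].
  have [n' [H1 H2]] := IH m (leq_trans (leq_trans Hm Hn) (leqnn _)) Hw'.
  have := IH m; have Hm' : m <= N by mlia.
  move=> /(_ Hm' Hw') [n'' [A1 A2]]; exists n''; split => //; mlia.
exists n; split => //; split => // m Hm.
by case: (leqP n m) => // Hlt; exfalso; apply: Hno; exists m.
Qed.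

Lemma root_walk (v : vtx) : walk (sz v) (@Defs.root A l X) v.
Proof.
have -> : @Defs.root A l X = vdrop (sz v) v by apply: vert_eq; rewrite /= drop_size.
exact/walk_rev/walk_down.
Qed.

Lemma dep_size v n : dep v n <-> n = sz v.
Proof.
split.
- case=> Hw Hmin; apply/eqP; rewrite eqn_leq Hmin; last exact: root_walk.
  have [k [H1 _ _ H4]] := walk_anc Hw; move: H1 H4 => /= H1 H4.
  by rewrite leqn0 in H1; rewrite (eqP H1) ?subn0 ?add0n in H4 *.
- move=> ->; split; first exact: root_walk.
  move=> m Hw; have [k [H1 _ _ H4]] := walk_anc Hw; move: H1 H4 => /= H1 H4.
  by rewrite leqn0 in H1; rewrite (eqP H1) ?subn0 ?add0n in H4 *.
Qed.

Lemma ell_size f v : elliptic f -> sz (f v) = sz v.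
Proof. by case=> _ Hd; apply/esym/dep_size/Hd/dep_size. Qed.

Lemma ell_walk f n u v : elliptic f -> walk n u v ->
  exists m, m <= n /\ walk m (f u) (f v).
Proof.
move=> Hf Hw; have [n' [Hn' Hg]] := geo_exists Hw.
have Hw2 : walk (sz (f u) + sz (f v)) (f u) (f v).
  exact: walk_cat (walk_rev (root_walk _)) (root_walk _).
have [m' [Hm' Hg2]] := geo_exists Hw2.
exists m'; split; last by case: Hg2.
by apply: leq_trans (proj1 Hf _ _ _ _ Hg Hg2) Hn'.
Qed.


Local Notation lf := (leaf l X).

Lemma sz_le (v : vtx) : sz v <= l.
Proof. by case: (svalP v). Qed.

Lemma leaf_eq (x y : lf) : sval (sval x) = sval (sval y) -> x = y.
Proof.
destruct x as [u pu], y as [w pw]; simpl => E.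
have E' : u = w by apply: vert_eq.
subst w; f_equal; apply: proof_irrelevance.
Qed.

Lemma drop_split k a b (s : seq A) : k <= a -> a <= b ->
  drop (b - k) s = drop (a - k) (drop (b - a) s).
Proof. by move=> H1 H2; rewrite drop_drop; congr drop; mlia. Qed.

Hypothesis Hne : forall i, 0 < i <= l -> exists a, X i a.

Lemma extend n s : valid_path X s -> size s + n <= l ->
  exists t, [/\ valid_path X t, size t = size s + n & drop n t = s].
Proof.
move=> Hs; elim: n => [|n IH] Hn.
  by exists s; rewrite addn0 drop0.
have Hn' : size s + n <= l by mlia.
have [t [Ht1 Ht2 Ht3]] := IH Hn'.
have Hi : 0 < (size t).+1 <= l by rewrite Ht2; mlia.
have [a Ha] := Hne Hi.
exists (a :: t); split => //=; first by rewrite Ht2 addnS.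
Qed.

Lemma leaf_ext (v : vtx) : exists x : lf, drop (l - sz v) (sval (sval x)) = sval v.
Proof.
have [t [Ht1 Ht2 Ht3]] : exists t, [/\ valid_path X t, size t = sz v + (l - sz v)
   & drop (l - sz v) t = sval v].
  by move: (sz_le v) => ?; apply: extend; [case: (svalP v) | mlia].
have Hsz : size t = l by rewrite Ht2; move: (sz_le v) => ?; mlia.
have Ht : is_vertex l X t by split => //; rewrite Hsz.
pose w : vtx := exist _ t Ht.
by exists (exist (fun v : vtx => size (sval v) = l) w Hsz).
Qed.

Lemma ell_anc f (w v : vtx) : elliptic f -> sz w = l ->
  drop (l - sz v) (sval w) = sval v ->
  sval (f v) = drop (l - sz v) (sval (f w)).
Proof.
move=> Hf Hw E.
have Hv := sz_le v.
have Hwv : walk (l - sz v) w v.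
  have Ev : vdrop (l - sz v) w = v by apply: vert_eq.
  have Hj : l - sz v <= sz w by rewrite Hw leq_subr.
  by have := walk_down Hj; rewrite Ev.
have [m [Hm Hwm]] := ell_walk Hf Hwv.
have [k [H1 H2 H3 H4]] := walk_anc Hwm.
move: H1 H2 H3 H4; rewrite !ell_size // Hw => H1 H2 H3 H4.
have ek : k = sz v by mlia.
by subst k; move: H3; rewrite subnn drop0 => <-.
Qed.

Lemma part1 f : elliptic f -> exists phi : lf -> lf, restricts f phi /\ sequential phi.
Proof.
move=> Hf.
have Hsz : forall x : lf, size (sval (f (sval x))) = l.
  by move=> x; rewrite ell_size //; case: x.
exists (fun x => exist (fun v : vtx => size (sval v) = l) (f (sval x)) (Hsz x)).
split => // i x y /=.
have Hx := svalP x; have Hy := svalP y; simpl in Hx, Hy.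
set d := l - i => E.
have Hd : d <= l by apply: leq_subr.
have Hj : l - d <= sz (sval x) by rewrite Hx leq_subr.
have Hj' : l - d <= sz (sval y) by rewrite Hy leq_subr.
have Hw := walk_via Hj Hj'.
rewrite Hx Hy in Hw.
have e : l - (l - d) = d by mlia.
rewrite e in Hw.
have [m [Hm Hwm]] := ell_walk Hf (Hw E).
have [k [H1 H2 H3 H4]] := walk_anc Hwm.
move: H1 H2 H3 H4; rewrite (Hsz x) (Hsz y) => H1 H2 H3 H4.
have Hk : l - d <= k by mlia.
rewrite -e !(drop_split _ Hk H1).
by rewrite H3.
Qed.

Lemma part3 f g (phi : lf -> lf) : elliptic f -> elliptic g ->
  restricts f phi -> restricts g phi -> f = g.
Proof.
move=> Hf Hg Rf Rg; apply: functional_extensionality => v.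
have [x Hx] := leaf_ext v.
have Hl := svalP x.
apply: vert_eq.
rewrite (ell_anc Hf Hl Hx) (ell_anc Hg Hl Hx).
by rewrite -Rf -Rg.
Qed.

Lemma part2 (phi : lf -> lf) : sequential phi ->
  exists f : vtx -> vtx, elliptic f /\ restricts f phi.
Proof.
move=> Hphi.
pose ext v := proj1_sig (constructive_indefinite_description _ (leaf_ext v)).
have Hext : forall v, drop (l - sz v) (sval (sval (ext v))) = sval v.
  by move=> v; exact: (proj2_sig (constructive_indefinite_description _ (leaf_ext v))).
pose f v := vdrop (l - sz v) (sval (phi (ext v))).
have Hfs : forall v, sz (f v) = sz v.
  move=> v; rewrite /= size_drop (svalP (phi (ext v))).
  by move: (sz_le v) => ?; mlia.
have Hlx : forall x : lf, sz (sval x) = l by move=> x; exact: (svalP x).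
exists f; split; last first.
  move=> x; apply: vert_eq => /=.
  have -> : ext (sval x) = x.
    by apply: leaf_eq; have := Hext (sval x); rewrite Hlx subnn drop0.
  by rewrite Hlx subnn drop0.
split; last first.
  by move=> v n /dep_size ->; apply/dep_size; rewrite Hfs.
move=> u v n m [Hw _] [_ Hmin].
have [k [H1 H2 H3 H4]] := walk_anc Hw.
apply: leq_trans (Hmin _ (walk_via (u := f u) (v := f v) (k := k) _ _ _)) _;
  rewrite ?Hfs //.
have Hu := sz_le u; have Hv := sz_le v.
rewrite /= -(drop_split _ H1 Hu) -(drop_split _ H2 Hv).
apply: Hphi.
rewrite (drop_split _ H1 Hu) (drop_split _ H2 Hv) !Hext //.
Qed.

End Aux.

Theorem proposition3p4 (A : Type) (l : nat) (X : nat -> A -> Prop) :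
  0 < l ->
  (forall i, 0 < i <= l -> exists a, X i a) ->
  [/\ (* restriction maps Ell into M(X_l) o ... o M(X_1) *)
      forall f : vertex l X -> vertex l X, elliptic f ->
        exists phi : leaf l X -> leaf l X, restricts f phi /\ sequential phi,
      (* surjective *)
      forall phi : leaf l X -> leaf l X, sequential phi ->
        exists f : vertex l X -> vertex l X, elliptic f /\ restricts f phi,
      (* injective *)
      forall (f g : vertex l X -> vertex l X) (phi : leaf l X -> leaf l X),
        elliptic f -> elliptic g -> restricts f phi -> restricts g phi -> f = g,
      (* identity is preserved *)
      restricts (@id (vertex l X)) (@id (leaf l X)) &
      (* composition (maps on the right) is preserved *)
      forall (f g : vertex l X -> vertex l X) (phi psi : leaf l X -> leaf l X),
        elliptic f -> elliptic g ->
        restricts f phi -> restricts g psi -> restricts (g \o f) (psi \o phi)].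
Proof.
move=> _ Hne; split.
- exact: part1.
- exact: part2.
- move=> f g phi Hf Hg; apply: part3 => //.
- by [].
- by move=> f g phi psi _ _ Rf Rg x /=; rewrite Rg Rf.
Qed.
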